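(* There is an isomorphism of multiplicative groups $\sigma:(\mathbb Q\setminus\{0\},\cdot)\to(\mathbb F_3(t)\setminus\{0\},\cdot)$, and letting $\lambda\in\mathbb Q$ act on $V=\mathbb Q\oplus\mathbb F_3(t)$ by $\lambda(v_1,v_2)=(\lambda v_1,\sigma(\lambda)v_2)$ (with $\sigma(0)=0$) makes $(V,\mathbb Q)$ a near vector space over the commutative $F=\mathbb Q$ whose two blocks $\mathbb Q\oplus0$ and $0\oplus\mathbb F_3(t)$ induce fields $(F,+_u,\circ)$ of different characteristics ($0$ and $3$).
   Context: A near vector space $(V,F)$: $(V,+)$ a group, $F$ a set of endomorphisms containing $0,1,-1$, with $F\setminus\{0\}$ a subgroup of $\mathrm{Aut}(V,+)$ acting fixed point freely ($\alpha x=\beta x\Rightarrow\alpha=\beta$ or $x=0$), such that the quasi-kernel $Q(V)=\{u:\forall\alpha,\beta\in F\,\exists\gamma\in F\ \alpha u+\beta u=\gamma u\}$ generates $V$. For $u\in Q(V)\setminus\{0\}$, $\alpha+_u\beta$ is the unique $\gamma\in F$ with $\alpha u+\beta u=\gamma u$; for commutative $F$, $(F,+_u,\circ)$ is a field. Blocks are the summands in André's decomposition of $V$ into maximal regular near vector subspaces, each nonzero quasi-kernel element lying in exactly one. *)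

(* Defs.v *)
From HB Require Import structures.
From mathcomp Require Import all_boot all_order all_algebra.
Set Implicit Arguments. Unset Strict Implicit. Unset Printing Implicit Defensive.
Import Order.TTheory GRing.Theory Num.Theory.
Local Open Scope ring_scope.

(* Generic near vector space notions.  V is the additive group; F is *)
(* a set (predicate) of maps V -> V; W is a subset of V (W = all of V *)
(* for the ambient space, or a candidate near vector subspace, on     *)
(* which F acts by restriction).                                      *)
Section NVS.
Variable V : zmodType.

Definition zero_map : V -> V := fun _ => 0.

Definition setTV : V -> Prop := fun _ => True.

Definition agree_on (W : V -> Prop) (f g : V -> V) : Prop :=
  forall x, W x -> f x = g x.

Definition quasi_kernel (F : (V -> V) -> Prop) (W : V -> Prop) (u : V) : Prop :=
  W u /\ (forall a b, F a -> F b -> exists2 c, F c & a u + b u = c u).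

Inductive gen (S : V -> Prop) : V -> Prop :=
| gen_in x : S x -> gen S x
| gen0 : gen S 0
| genD x y : gen S x -> gen S y -> gen S (x + y)
| genN x : gen S x -> gen S (- x).

Definition subgroup_of (W : V -> Prop) : Prop :=
  W 0 /\ (forall x y, W x -> W y -> W (x + y)) /\ (forall x, W x -> W (- x)).

Definition endos_of (F : (V -> V) -> Prop) (W : V -> Prop) : Prop :=
  forall f, F f -> (forall x y, f (x + y) = f x + f y) /\ (forall x, W x -> W (f x)).

Definition has_0_1_m1 (F : (V -> V) -> Prop) : Prop :=
  F zero_map /\ F id /\ F (fun x => - x).

Definition units_subgroup (F : (V -> V) -> Prop) (W : V -> Prop) : Prop :=
  (forall f g, F f -> F g -> exists2 h, F h & agree_on W h (f \o g))
  /\ (forall f, F f -> ~ agree_on W f zero_map ->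
        exists2 g, F g & ((forall x, W x -> g (f x) = x) /\ (forall x, W x -> f (g x) = x))).

Definition fixed_point_free (F : (V -> V) -> Prop) (W : V -> Prop) : Prop :=
  forall f g x, F f -> F g -> W x -> f x = g x -> agree_on W f g \/ x = 0.

Definition qk_generates (F : (V -> V) -> Prop) (W : V -> Prop) : Prop :=
  forall x, W x -> gen (quasi_kernel F W) x.

Definition near_vector_space (F : (V -> V) -> Prop) (W : V -> Prop) : Prop :=
  subgroup_of W /\ endos_of F W /\ has_0_1_m1 F /\ units_subgroup F W /\
  fixed_point_free F W /\ qk_generates F W.

(* u, v in Q(W)\{0} are compatible if u + l v in Q(W) for some nonzero l in F;
   W is regular if any two such elements are compatible (Andre). *)
Definition regular (F : (V -> V) -> Prop) (W : V -> Prop) : Prop :=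
  forall u v, quasi_kernel F W u -> quasi_kernel F W v -> u <> 0 -> v <> 0 ->
    exists2 l, F l & (~ agree_on W l zero_map /\ quasi_kernel F W (u + l v)).

Definition is_block (F : (V -> V) -> Prop) (W : V -> Prop) : Prop :=
  [/\ near_vector_space F W, regular F W &
      forall W', near_vector_space F W' -> regular F W' ->
        (forall x, W x -> W' x) -> forall x, W' x -> W x].

(* nmul_one F u n g : g is n * 1 computed in (F, +_u), i.e. iterating
   g_{n+1} = g_n +_u 1 where a +_u b is the c in F with a u + b u = c u. *)
Inductive nmul_one (F : (V -> V) -> Prop) (u : V) : nat -> (V -> V) -> Prop :=
| nm0 : nmul_one F u 0 zero_map
| nmS n g h : nmul_one F u n g -> F h -> g u + id u = h u -> nmul_one F u n.+1 h.

Definition field_char (F : (V -> V) -> Prop) (u : V) (p : nat) : Prop :=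
  (forall n g, (0 < n)%N -> (p == 0%N) || (n < p)%N -> nmul_one F u n g ->
     ~ agree_on setTV g zero_map)
  /\ ((0 < p)%N -> exists2 g, nmul_one F u p g & agree_on setTV g zero_map).

End NVS.

Definition F3t := {fraction {poly 'F_3}}.
Definition Vex := (rat * F3t)%type.

Definition act (sigma : rat -> F3t) (l : rat) (v : Vex) : Vex :=
  (l * v.1, sigma l * v.2).

Definition Fex (sigma : rat -> F3t) : (Vex -> Vex) -> Prop :=
  fun f => exists l : rat, f = act sigma l.

Definition block1 : Vex -> Prop := fun v => v.2 = 0.
Definition block2 : Vex -> Prop := fun v => v.1 = 0.

(* Main.v *)
Require Import Defs.
From HB Require Import structures.
From mathcomp Require Import all_boot all_order all_algebra.
From mathcomp Require finmap boolp classical_sets cardinality.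
From mathcomp Require zify.
From mathcomp.algebra_tactics Require ring lra.
From Stdlib Require Classical.
Import GRing.Theory.
Local Open Scope ring_scope.

Module QC.
Import boolp Classical ring lra.
Import GRing.Theory Num.Theory.
Local Open Scope ring_scope.
Set Implicit Arguments. Unset Strict Implicit. Unset Printing Implicit Defensive.
Lemma F3_3 : (3%:R : F3t) = 0.
Proof.
have -> : (3%:R : F3t) = FracField.tofrac ((3%:R : 'F_3)%:P).
  by rewrite polyC_natr rmorph_nat.
have -> : (3%:R : 'F_3) = 0 by apply/eqP.
by rewrite polyC0 tofrac0.
Qed.

Lemma F3_2 : (2%:R : F3t) != 0.
Proof.
have -> : (2%:R : F3t) = FracField.tofrac ((2%:R : 'F_3)%:P).
  by rewrite polyC_natr rmorph_nat.
by rewrite tofrac_eq0 polyC_eq0; apply/eqP.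
Qed.

Lemma F3_11 : (1 + 1 : F3t) = -1.
Proof.
apply/eqP; rewrite -subr_eq0 opprK.
by have := F3_3; rewrite !mulrSr add0r => ->.
Qed.

Section NV.
Variable sig : rat -> F3t.
Hypothesis s0 : sig 0 = 0.
Hypothesis sM : forall x y, sig (x * y) = sig x * sig y.
Hypothesis sinj : injective sig.
Hypothesis snz : forall x, x != 0 -> sig x != 0.
Hypothesis ssurj : forall y, y != 0 -> exists x, x != 0 /\ sig x = y.
Hypothesis s1 : sig 1 = 1.
Hypothesis sN1 : sig (-1) = -1.

Local Notation F := (Fex sig).
Local Notation A := (act sig).

Lemma actE l (v : Vex) : A l v = (l * v.1, sig l * v.2). Proof. by []. Qed.
Lemma V0 : (0 : Vex) = (0, 0). Proof. by []. Qed.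
Lemma addVE (x y : Vex) : x + y = (x.1 + y.1, x.2 + y.2). Proof. by []. Qed.
Lemma oppVE (x : Vex) : - x = (- x.1, - x.2). Proof. by []. Qed.
Lemma pair0 (a : rat) (b : F3t) : ((a, b) : Vex) = 0 <-> a = 0 /\ b = 0.
Proof. by rewrite V0; split => [[-> ->]|[-> ->]]. Qed.

Lemma act0 : A 0 = @zero_map Vex.
Proof. by apply: funext => v; rewrite actE s0 !mul0r. Qed.
Lemma act1 : A 1 = id.
Proof. by apply: funext => v; rewrite actE s1 !mul1r; case: v. Qed.
Lemma actN1 : A (-1) = (fun x => - x).
Proof. by apply: funext => v; rewrite actE sN1 !mulN1r oppVE. Qed.
Lemma actD l (x y : Vex) : A l (x + y) = A l x + A l y.
Proof. by rewrite !actE addVE !mulrDr. Qed.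
Lemma actM l m : A l \o A m = A (l * m).
Proof. by apply: funext => v /=; rewrite !actE /= sM !mulrA. Qed.

Lemma sig_eq0 l : sig l = 0 -> l = 0.
Proof. by move=> h; apply/eqP; apply/negPn/negP => /snz; rewrite h eqxx. Qed.

Lemma sig_surj' y : exists k, sig k = y.
Proof.
have [->|y0] := eqVneq y 0; first by exists 0.
by have [x [_ <-]] := ssurj y0; exists x.
Qed.

Lemma FA l : F (A l). Proof. by exists l. Qed.

Lemma has01 : has_0_1_m1 F.
Proof.
split; first by exists 0; rewrite act0.
split; first by exists 1; rewrite act1.
by exists (-1); rewrite actN1.
Qed.

Lemma units_all W : units_subgroup F W.
Proof.
split.
  move=> f g [l ->] [m ->]; exists (A (l * m)); first exact: FA.
  by move=> x _; rewrite -actM.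
move=> f [l ->] nz.
have l0 : l != 0.
  by apply/eqP => l0; apply: nz => x _; rewrite l0 act0.
exists (A l^-1); first exact: FA.
split => x _.
  by have := congr1 (fun h => h x) (actM l^-1 l); rewrite /= mulVf // act1 => ->.
by have := congr1 (fun h => h x) (actM l l^-1); rewrite /= mulfV // act1 => ->.
Qed.

Lemma qk_b1 W u : W u -> block1 u -> quasi_kernel F W u.
Proof.
move=> Wu bu; split=> // a b [l ->] [m ->]; exists (A (l + m)); first exact: FA.
by rewrite !actE addVE bu !mulr0 addr0 mulrDl.
Qed.

Lemma qk_b2 W u : W u -> block2 u -> quasi_kernel F W u.
Proof.
move=> Wu bu; split=> // a b [l ->] [m ->].
have [k ek] := sig_surj' (sig l + sig m).
exists (A k); first exact: FA.
by rewrite !actE addVE /= bu !mulr0 addr0 -mulrDl ek.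
Qed.

Lemma qk_split W u : quasi_kernel F W u -> block1 u \/ block2 u.
Proof.
case=> _ h; have [c [k ->] e] := h _ _ (FA 1) (FA 1).
rewrite !actE addVE s1 !mul1r in e; case: e => e1 e2.
have [b1|n1] := eqVneq u.2 0; first by left.
have [b2|n2] := eqVneq u.1 0; first by right.
exfalso.
have k2 : k = 1 + 1.
  by apply: (mulIf n2); rewrite -e1 mulrDl mul1r.
have sk : sig k = -1.
  by apply: (mulIf n1); rewrite -e2 -F3_11 mulrDl mul1r.
have : k = -1 by apply: sinj; rewrite sk sN1.
rewrite k2 => h2; lra.
Qed.

Lemma gen_sub (S B : Vex -> Prop) : B 0 -> (forall x y, B x -> B y -> B (x + y)) ->
  (forall x, B x -> B (- x)) -> (forall x, S x -> B x) -> forall x, gen S x -> B x.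
Proof. by move=> B0 BD BN SB x; elim => //; auto. Qed.

Lemma sub1 : subgroup_of block1.
Proof.
split; first by [].
split; first by move=> x y; rewrite /block1 addVE /= => -> ->; rewrite addr0.
by move=> x; rewrite /block1 oppVE /= => ->; rewrite oppr0.
Qed.

Lemma sub2 : subgroup_of block2.
Proof.
split; first by [].
split; first by move=> x y; rewrite /block2 addVE /= => -> ->; rewrite addr0.
by move=> x; rewrite /block2 oppVE /= => ->; rewrite oppr0.
Qed.

Lemma Vsplit (x : Vex) : x = (x.1, 0) + (0, x.2).
Proof. by case: x => a b; rewrite addVE /= addr0 add0r. Qed.


Lemma fpf_core l m (x : Vex) : l != m -> A l x = A m x -> x = 0.
Proof.
move=> nlm; rewrite !actE => -[e1 e2].
have x1 : x.1 = 0.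
  have : (l - m) * x.1 = 0 by rewrite mulrBl e1 subrr.
  by move/eqP; rewrite mulf_eq0 subr_eq0 (negPf nlm) /= => /eqP.
have ns : sig l != sig m by apply: contra nlm => /eqP /sinj ->.
have x2 : x.2 = 0.
  have : (sig l - sig m) * x.2 = 0 by rewrite mulrBl e2 subrr.
  by move/eqP; rewrite mulf_eq0 subr_eq0 (negPf ns) /= => /eqP.
by move: x1 x2; case: x {e1 e2} => a b /= -> ->.
Qed.

Lemma nz1 (u : Vex) : u <> 0 -> block1 u -> u.1 != 0.
Proof. by case: u => a b h; rewrite /block1 /block2 /= => hb; apply/eqP => ha; apply: h; rewrite ha hb. Qed.
Lemma nz2 (u : Vex) : u <> 0 -> block2 u -> u.2 != 0.
Proof. by case: u => a b h; rewrite /block1 /block2 /= => hb; apply/eqP => ha; apply: h; rewrite ha hb. Qed.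

Lemma nvsT : near_vector_space F (@setTV Vex).
Proof.
split; first by [].
split; first by move=> f [l ->]; split => // x y; exact: actD.
split; first exact: has01.
split; first exact: units_all.
split.
  move=> f g x [l ->] [m ->] _ e.
  have [lm|nlm] := eqVneq l m; first by left => y _; rewrite lm.
  by right; apply: fpf_core e.
move=> x _; rewrite (Vsplit x); apply: genD; apply: gen_in.
  exact: qk_b1.
exact: qk_b2.
Qed.

Lemma nvs1 : near_vector_space F block1.
Proof.
split; first exact: sub1.
split; first by move=> f [l ->]; split => [x y|x]; [exact: actD|rewrite /block1 actE /= => ->; rewrite mulr0].
split; first exact: has01.
split; first exact: units_all.
split.
  move=> f g x [l ->] [m ->] _ e.
  have [lm|nlm] := eqVneq l m; first by left => y _; rewrite lm.
  by right; apply: fpf_core e.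
by move=> x bx; apply: gen_in; apply: qk_b1.
Qed.

Lemma nvs2 : near_vector_space F block2.
Proof.
split; first exact: sub2.
split; first by move=> f [l ->]; split => [x y|x]; [exact: actD|rewrite /block2 actE /= => ->; rewrite mulr0].
split; first exact: has01.
split; first exact: units_all.
split.
  move=> f g x [l ->] [m ->] _ e.
  have [lm|nlm] := eqVneq l m; first by left => y _; rewrite lm.
  by right; apply: fpf_core e.
by move=> x bx; apply: gen_in; apply: qk_b2.
Qed.

Lemma reg1 : regular F block1.
Proof.
move=> u v [bu _] [bv _] _ _; exists (A 1); first exact: FA.
split.
  move=> /(_ (1, 0) erefl); rewrite act1 /zero_map => /pair0 [h _].
  by move: (@oner_neq0 rat); rewrite h eqxx.
rewrite act1; apply: qk_b1 => //; exact: sub1.2.1.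
Qed.

Lemma reg2 : regular F block2.
Proof.
move=> u v [bu _] [bv _] _ _; exists (A 1); first exact: FA.
split.
  move=> /(_ (0, 1) erefl); rewrite act1 /zero_map => /pair0 [_ h].
  by move: (@oner_neq0 F3t); rewrite h eqxx.
rewrite act1; apply: qk_b2 => //; exact: sub2.2.1.
Qed.

Lemma max1 W' : near_vector_space F W' -> regular F W' ->
  (forall x, block1 x -> W' x) -> forall x, W' x -> block1 x.
Proof.
move=> [_ [_ [_ [_ [_ qg]]]]] reg sub x Wx.
apply: NNPP => nb.
have : exists u, [/\ quasi_kernel F W' u, u <> 0 & block2 u].
  apply: NNPP => nex; apply: nb.
  apply: (gen_sub sub1.1 sub1.2.1 sub1.2.2 _ (qg x Wx)).
  move=> u qu; case: (qk_split qu) => // b2.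
  case: (classic (u = 0)) => [->//|u0].
  by exfalso; apply: nex; exists u.
case=> u [qu u0 b2].
have qe : quasi_kernel F W' (1, 0) by apply: qk_b1 => //; apply: sub.
have e0 : ((1, 0) : Vex) <> 0.
  by move/pair0 => [h _]; move: (@oner_neq0 rat); rewrite h eqxx.
have [g [k ->] [nz qs]] := reg _ _ qe qu e0 u0.
have u2 := nz2 u0 b2.
case: (qk_split qs); rewrite /block1 /block2 addVE actE /= ?(b2 : u.1 = 0) ?mulr0 ?add0r ?addr0.
  move/eqP; rewrite mulf_eq0 (negPf u2) orbF => /eqP /sig_eq0 k0.
  by apply: nz => y _; rewrite k0 act0.
by move=> h; move: (@oner_neq0 rat); rewrite h eqxx.
Qed.

Lemma max2 W' : near_vector_space F W' -> regular F W' ->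
  (forall x, block2 x -> W' x) -> forall x, W' x -> block2 x.
Proof.
move=> [_ [_ [_ [_ [_ qg]]]]] reg sub x Wx.
apply: NNPP => nb.
have : exists u, [/\ quasi_kernel F W' u, u <> 0 & block1 u].
  apply: NNPP => nex; apply: nb.
  apply: (gen_sub sub2.1 sub2.2.1 sub2.2.2 _ (qg x Wx)).
  move=> u qu; case: (qk_split qu) => // b1.
  case: (classic (u = 0)) => [->//|u0].
  by exfalso; apply: nex; exists u.
case=> u [qu u0 b1].
have qe : quasi_kernel F W' (0, 1) by apply: qk_b2 => //; apply: sub.
have e0 : ((0, 1) : Vex) <> 0.
  by move/pair0 => [_ h]; move: (@oner_neq0 F3t); rewrite h eqxx.
have [g [k ->] [nz qs]] := reg _ _ qe qu e0 u0.
have u1 := nz1 u0 b1.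
case: (qk_split qs); rewrite /block1 /block2 addVE actE /= ?(b1 : u.2 = 0) ?mulr0 ?add0r ?addr0.
  by move=> h; move: (@oner_neq0 F3t); rewrite h eqxx.
move/eqP; rewrite mulf_eq0 (negPf u1) orbF => /eqP k0.
by apply: nz => y _; rewrite k0 act0.
Qed.

Lemma block1_is : is_block F block1.
Proof. split; [exact: nvs1 | exact: reg1 | exact: max1]. Qed.

Lemma block2_is : is_block F block2.
Proof. split; [exact: nvs2 | exact: reg2 | exact: max2]. Qed.

Lemma blocks_only W : is_block F W ->
  (forall v, W v <-> block1 v) \/ (forall v, W v <-> block2 v).
Proof.
case=> [[_ [_ [_ [_ [_ qg]]]]] reg max].
have nomix : forall u1 u2, quasi_kernel F W u1 -> u1 <> 0 -> block1 u1 ->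
    quasi_kernel F W u2 -> u2 <> 0 -> block2 u2 -> False.
  move=> u1 u2 q1 n1 b1 q2 n2 b2.
  have [g [k ->] [nz qs]] := reg u1 u2 q1 q2 n1 n2.
  have v1 := nz1 n1 b1; have v2 := nz2 n2 b2.
  case: (qk_split qs); rewrite /block1 /block2 addVE actE /= ?(b1 : u1.2 = 0) ?(b2 : u2.1 = 0) ?mulr0 ?add0r ?addr0.
    move/eqP; rewrite mulf_eq0 (negPf v2) orbF => /eqP /sig_eq0 k0.
    by apply: nz => y _; rewrite k0 act0.
  by move=> h; move: v1; rewrite h eqxx.
case: (classic (exists u, [/\ quasi_kernel F W u, u <> 0 & block2 u])) => [[u2 [q2 n2 b2]]|no2].
  right.
  have sub : forall v, W v -> block2 v.
    move=> v Wv; apply: (gen_sub sub2.1 sub2.2.1 sub2.2.2 _ (qg v Wv)).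
    move=> u qu; case: (qk_split qu) => // b1.
    case: (classic (u = 0)) => [->//|u0].
    by exfalso; apply: (nomix u u2).
  by move=> v; split; [apply: sub | apply: (max _ nvs2 reg2 sub)].
left.
have sub : forall v, W v -> block1 v.
  move=> v Wv; apply: (gen_sub sub1.1 sub1.2.1 sub1.2.2 _ (qg v Wv)).
  move=> u qu; case: (qk_split qu) => // b2.
  case: (classic (u = 0)) => [->//|u0].
  by exfalso; apply: no2; exists u.
by move=> v; split; [apply: sub | apply: (max _ nvs1 reg1 sub)].
Qed.

Lemma nmul_val (u : Vex) n g : nmul_one F u n g -> g u = u *+ n.
Proof.
elim => [|n' g' h _ IH _ e] /=; first by rewrite mulr0n.
by rewrite -e IH mulrSr.
Qed.

Lemma mulrn_fst (x : Vex) n : (x *+ n).1 = x.1 *+ n.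
Proof. by elim: n => [|n IH] //; rewrite !mulrSr addVE /= IH. Qed.
Lemma mulrn_snd (x : Vex) n : (x *+ n).2 = x.2 *+ n.
Proof. by elim: n => [|n IH] //; rewrite !mulrSr addVE /= IH. Qed.

Lemma char0 u : quasi_kernel F (@setTV Vex) u -> u <> 0 -> block1 u ->
  field_char F u 0.
Proof.
move=> _ u0 b1; split; last by [].
move=> n g n0 _ hg ag.
have := nmul_val hg; rewrite (ag u I) /zero_map => /(congr1 fst).
rewrite mulrn_fst /= => /esym /eqP; rewrite mulrn_eq0 (negPf (nz1 u0 b1)) orbF.
by move=> /eqP n00; move: n0; rewrite n00.
Qed.

Lemma char3 u : quasi_kernel F (@setTV Vex) u -> u <> 0 -> block2 u ->
  field_char F u 3.
Proof.
move=> _ u0 b2; have u2 := nz2 u0 b2.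
split.
  move=> n g n0 hn hg ag.
  have := nmul_val hg; rewrite (ag u I) /zero_map => /(congr1 snd).
  rewrite mulrn_snd /= => /esym /eqP.
  case: n n0 hn {hg} => [|[|[|n]]] //= _ _.
    by rewrite (negPf u2).
  by rewrite -mulr_natr mulf_eq0 (negPf u2) (negPf F3_2).
move=> _; case: u u0 b2 u2 => a b u0 b2 u2; have {}b2 : a = 0 := b2; subst a.
have e1 : @zero_map Vex (0, b) + id (0, b) = A 1 (0, b) by rewrite act1 /zero_map add0r.
have e2 : A 1 (0, b) + id (0, b) = A (-1) (0, b).
  rewrite act1 actN1 /= addVE oppVE /= addr0 oppr0; congr (_, _).
  by rewrite -{1 2}(mul1r b) -mulrDl F3_11 mulN1r.
have e3 : A (-1) (0, b) + id (0, b) = A 0 (0, b) by rewrite actN1 act0 /zero_map /= addNr.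
exists (A 0); last by move=> x _; rewrite act0.
exact: (nmS (nmS (nmS (nm0 F (0, b)) (FA 1) e1) (FA (-1)) e2) (FA 0) e3).
Qed.

Lemma NV_all :
  near_vector_space F (@setTV Vex)
    /\ (forall f g, F f -> F g -> f \o g = g \o f)
    /\ is_block F block1
    /\ is_block F block2
    /\ (forall W, is_block F W ->
          (forall v, W v <-> block1 v) \/ (forall v, W v <-> block2 v))
    /\ (forall u, quasi_kernel F (@setTV Vex) u -> u <> 0 -> block1 u ->
          field_char F u 0)
    /\ (forall u, quasi_kernel F (@setTV Vex) u -> u <> 0 -> block2 u ->
          field_char F u 3).
Proof.
split; first exact: nvsT.
split; first by move=> f g [l ->] [m ->]; rewrite !actM mulrC.
split; first exact: block1_is.
split; first exact: block2_is.
split; first exact: blocks_only.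
split; first exact: char0.
exact: char3.
Qed.
End NV.

End QC.

Module QA.
Import finmap boolp classical_sets cardinality zify ring lra.
Import GRing.Theory Num.Theory.
Local Open Scope classical_set_scope.
Local Open Scope ring_scope.
Set Implicit Arguments. Unset Strict Implicit. Unset Printing Implicit Defensive.
Local Notation Pl := {poly 'F_3}.
Definition mirr (q : Pl) : bool := (q \is monic) && irreducibleb q.

Lemma mirr_irr q : mirr q -> irreducible_poly q.
Proof. by case/andP=> _ /irreducibleP. Qed.

Lemma mirr_size q : mirr q -> (1 < size q)%N.
Proof. by move/mirr_irr=> [h _]. Qed.

Lemma mirr_coprime q r : mirr q -> mirr r -> q != r -> coprimep q r.
Proof.
move=> hq hr nqr; rewrite (irreducible_poly_coprime _ (mirr_irr hq)).
apply/negP=> dqr; move: nqr; rewrite -eqp_monic; last 2 first.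
- by case/andP: hq. - by case/andP: hr.
by rewrite (apply_irredp (mirr_irr hr) _ dqr) // neq_ltn mirr_size ?orbT.
Qed.


Lemma mirr_normalize f : irreducible_poly f -> mirr ((lead_coef f)^-1 *: f).
Proof.
move=> [sf irr]; have f0 : f != 0 by rewrite -size_poly_gt0 ltnW.
have l0 : lead_coef f != 0 by rewrite lead_coef_eq0.
have c0 : (lead_coef f)^-1 != 0 by rewrite invr_eq0.
apply/andP; split.
  by rewrite monicE lead_coefZ mulVf.
apply/irreducibleP; split; first by rewrite size_scale.
move=> d sd; rewrite dvdpZr // => /(irr _ sd) df.
by apply: eqp_trans df _; rewrite eqp_sym eqp_scale.
Qed.

Lemma ex_mirr_dvd (f : Pl) : (1 < size f)%N -> exists2 q, mirr q & q %| f.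
Proof.
move: {2}(size f) (leqnn (size f)) => n; elim: n f => [|n IH] f.
  by rewrite leqn0 => /eqP ->.
move=> sfn sf.
have f0 : f != 0 by rewrite -size_poly_gt0 ltnW.
case: (boolP (irreducibleb f)) => [/irreducibleP irr|nirr].
  exists ((lead_coef f)^-1 *: f); first exact: mirr_normalize.
  by rewrite dvdpZl // invr_eq0 lead_coef_eq0.
have: ~ (forall d : Pl, size d != 1%N -> d %| f -> d %= f).
  by move=> h; move/irreducibleP: nirr; apply; split.
move=> /existsNP [d] /not_implyP [sd] /not_implyP [df] /negP ndf.
have d0 : d != 0 by apply: contraNneq f0 => d0; move: df; rewrite d0 dvd0p.
have sdf : (size d < size f)%N.
  rewrite ltn_neqAle dvdp_size_eqp // ndf /=.
  exact: dvdp_leq.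
have sd1 : (1 < size d)%N.
  by rewrite ltn_neqAle eq_sym sd /= size_poly_gt0.
have [q hq qd] := IH d (leq_trans sdf sfn) sd1.
by exists q => //; apply: dvdp_trans qd df.
Qed.

Lemma infinite_mirr : infinite_set [set q : Pl | mirr q].
Proof.
move=> /finite_fsetP [X hX].
have inX q : mirr q -> q \in X.
  by move=> mq; have : [set q : Pl | mirr q] q by []; rewrite hX.
have Xin q : q \in X -> mirr q.
  by move=> qX; have : [set` X] q by []; rewrite -hX.
set g := \prod_(q <- X) q.
have mg : g \is monic by rewrite /g big_seq; apply: monic_prod => q /Xin /andP[].
have g0 : g != 0 by apply: monic_neq0.
set f := 'X * g + 1.
have sf : (1 < size f)%N.
  rewrite /f size_addl mulrC size_mulX // ?size_poly1 ltnS size_poly_gt0 //.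
have [q mq qf] := ex_mirr_dvd sf.
have qX := inX _ mq.
have qg : q %| g by rewrite /g (big_rem q) //= dvdp_mulr.
move: qf; rewrite /f dvdp_addr ?dvdp_mull // dvdp1 => /eqP sq1.
by move: (mirr_size mq); rewrite sq1.
Qed.

Lemma infinite_primes : infinite_set [set p : nat | prime p].
Proof.
move=> /finite_fsetP [X hX].
have [p ltp pp] := prime_above (\max_(x <- X) x).
have : [set p : nat | prime p] p by [].
rewrite hX /= => pX.
by move: ltp; rewrite ltnNge (@leq_bigmax_seq _ (X : seq nat) xpredT (fun x => x) p pX isT).
Qed.

Lemma exQ : exists Q : nat -> Pl,
  [/\ forall p, prime p -> mirr (Q p),
      forall p r, prime p -> prime r -> Q p = Q r -> p = r
    & forall q, mirr q -> exists2 p, prime p & Q p = q].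
Proof.
set A := [set q : Pl | mirr q]; set B := [set p : nat | prime p].
have AB : (A #= B)%card.
  apply: Cantor_Bernstein.
    apply: card_le_trans (countableP A) _.
    by apply/infiniteP; exact: infinite_primes.
  apply: card_le_trans (countableP B) _.
  by apply/infiniteP; exact: infinite_mirr.
have [f [ffun finj fsurj]] := card_set_bijP AB.
have : forall p : nat, exists q : Pl, prime p -> mirr q /\ f q = p.
  move=> p; have [pp|np] := boolP (prime p); last by exists 0.
  have [q Aq fq] : (f @` A) p by apply: fsurj.
  by exists q.
move=> /choice [Q hQ]; exists Q; split.
- by move=> p /hQ [].
- move=> p r pp pr eQ.
  by have [_ <-] := hQ p pp; have [_ <-] := hQ r pr; rewrite eQ.
- move=> q mq.
  have pq : prime (f q) by apply: (ffun q).
  exists (f q) => //.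
  have [mQ fQ] := hQ _ pq.
  by apply: finj; rewrite // inE.
Qed.

Lemma F3_cases (c : 'F_3) : c != 0 -> c = 1 \/ c = -1.
Proof. by case: c => [[|[|[|k]]] hk] //= _; [left|right]; apply/val_inj. Qed.

Lemma logn_big p n : (n < p)%N -> logn p n = 0%N.
Proof.
move=> np; apply/eqP; rewrite -leqn0 leqNgt logn_gt0 mem_primes.
apply/negP => /and3P [_ n0 /(dvdn_leq n0)]; rewrite leqNgt np.
by [].
Qed.

Lemma frac_repr (R : idomainType) (x : {fraction R}) :
  exists n d, d != 0 /\ x = (FracField.tofrac n) / (FracField.tofrac d).
Proof.
elim/quotW: x => r.
have dz : (r : {ratio R}).2 != 0 := denom_ratioP r.
exists r.1, r.2; split=>//.
apply: (mulIf (_ : FracField.tofrac r.2 != 0)); first by rewrite tofrac_eq0.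
rewrite divfK ?tofrac_eq0 //.
unlock FracField.tofrac.
rewrite -[_ * _]FracField.pi_mul.
apply/eqmodP => /=.
rewrite FracField.equivfE /FracField.mulf !numden_Ratio ?mulr1 ?mulr0 ?oner_eq0 ?mul1r //.
by rewrite mulrC.
Qed.

Lemma fld1 (F : fieldType) (u1 u2 a1 a2 b1 b2 : F) : b1 != 0 -> b2 != 0 ->
  u1 * u2 * (a1 * a2) / (b1 * b2) = u1 * a1 / b1 * (u2 * a2 / b2).
Proof. by move=> h1 h2; field; repeat (apply/andP; split). Qed.
Lemma fld2 (F : fieldType) (u1 u2 a b : F) : u2 != 0 -> b != 0 ->
  u1 * u2^-1 * a / b = u1 * a / (u2 * b).
Proof. by move=> h1 h2; field; repeat (apply/andP; split). Qed.

Section Sig.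
Variable Q : nat -> Pl.
Hypothesis Qm : forall p, prime p -> mirr (Q p).
Hypothesis Qi : forall p r, prime p -> prime r -> Q p = Q r -> p = r.
Hypothesis Qs : forall q, mirr q -> exists2 p, prime p & Q p = q.

Definition Pn (n : nat) : Pl := \prod_(p < n.+1 | prime p) Q p ^+ logn p n.

Lemma PnE n N : (n < N)%N -> Pn n = \prod_(p < N | prime p) Q p ^+ logn p n.
Proof.
move=> nN; rewrite /Pn (@big_ord_widen_cond _ _ _ _ _ prime (fun p => Q p ^+ logn p n) nN).
rewrite [RHS]big_mkcond [LHS]big_mkcond; apply: eq_bigr => i _.
case: (prime i) => //=; case: ltnP => // hi.
by rewrite logn_big // expr0.
Qed.

Lemma PnM m n : (0 < m)%N -> (0 < n)%N -> Pn (m * n) = Pn m * Pn n.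
Proof.
move=> m0 n0.
rewrite (PnE (n := m * n) (N := (m * n).+1)) // (PnE (n := m) (N := (m * n).+1)) ?ltnS ?leq_pmulr //.
rewrite (PnE (n := n) (N := (m * n).+1)) ?ltnS ?leq_pmull // -big_split /=.
by apply: eq_bigr => i _; rewrite lognM // exprD.
Qed.

Lemma Pn1 : Pn 1 = 1.
Proof. by rewrite /Pn big1 // => i _; rewrite logn1 expr0. Qed.

Lemma Pnp p : prime p -> Pn p = Q p.
Proof.
move=> pp; rewrite /Pn (bigD1 (Ordinal (ltnSn p))) //= logn_prime // eqxx expr1.
rewrite big1 ?mulr1 // => i /andP [pi ip]; rewrite logn_prime //.
case: eqP => [ei|]; last by rewrite expr0.
by move: ip; rewrite -(inj_eq val_inj) /= ei eqxx.
Qed.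

Lemma Pn_monic n : Pn n \is monic.
Proof.
by apply: monic_prod => i pi; apply: monic_exp; case/andP: (Qm pi).
Qed.

Lemma Pn_neq0 n : Pn n != 0.
Proof. exact: monic_neq0 (Pn_monic n). Qed.

Lemma Q_coprime_Pn p n : prime p -> ~~ (p %| n)%N -> coprimep (Q p) (Pn n).
Proof.
move=> pp npn; rewrite /Pn.
apply: (big_ind (fun x => coprimep (Q p) x)).
- exact: coprimep1.
- by move=> x y hx hy; rewrite coprimepMr hx hy.
move=> i pi; have [ei|nei] := eqVneq (i : nat) p.
  rewrite ei; suff -> : logn p n = 0%N by rewrite expr0 coprimep1.
  by apply/eqP; rewrite -leqn0 leqNgt logn_gt0 mem_primes (negPf npn) !andbF.
apply: coprimep_expr; apply: mirr_coprime; try exact: Qm.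
by apply/eqP => /Qi -/(_ pp pi) eip; move: nei; rewrite eip eqxx.
Qed.

Lemma Q_dvd_Pn p n : prime p -> (p %| n)%N -> (0 < n)%N -> Q p %| Pn n.
Proof.
move=> pp pn n0.
have pn1 : (p < n.+1)%N by rewrite ltnS dvdn_leq.
rewrite /Pn (bigD1 (Ordinal pn1)) //= dvdp_mulr //.
have : (0 < logn p n)%N by rewrite logn_gt0 mem_primes pp n0 pn.
by case: (logn p n) => // k _; rewrite exprS dvdp_mulr.
Qed.

Lemma Pn_inj1 a b : coprime a b -> (0 < a)%N -> (0 < b)%N -> Pn a = Pn b -> a = 1%N.
Proof.
move=> cab a0 b0 eab; apply/eqP; rewrite eqn_leq a0 andbT leqNgt; apply/negP => a1.
set p := pdiv a.
have pp : prime p := pdiv_prime a1.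
have pa : (p %| a)%N := pdiv_dvd a.
have npb : ~~ (p %| b)%N.
  apply/negP => pb; have : (p %| gcdn a b)%N by rewrite dvdn_gcd pa pb.
  by rewrite (eqP cab) dvdn1 => /eqP p1; move: (prime_gt1 pp); rewrite p1.
have := Q_coprime_Pn pp npb.
rewrite (irreducible_poly_coprime _ (mirr_irr (Qm pp))) -eab.
by rewrite Q_dvd_Pn.
Qed.

Lemma Pn_inj a b : coprime a b -> (0 < a)%N -> (0 < b)%N -> Pn a = Pn b ->
  a = 1%N /\ b = 1%N.
Proof.
move=> cab a0 b0 eab; split; first exact: Pn_inj1 eab.
by apply: (Pn_inj1 _ b0 a0 (esym eab)); rewrite coprime_sym.
Qed.


Lemma factor (f : Pl) : f != 0 -> exists (s : bool) (n : nat), (0 < n)%N /\ f = (-1)^+s * Pn n.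
Proof.
move: {2}(size f) (leqnn (size f)) => k; elim: k f => [|k IH] f.
  by rewrite leqn0 size_poly_eq0 => /eqP ->; rewrite eqxx.
move=> sfk f0.
case: (leqP (size f) 1) => [sf1|sf1].
  have := size1_polyC sf1; move: (f`_0) => c fE.
  have c0 : c != 0 by move: f0; rewrite fE polyC_eq0.
  case: (F3_cases c0) => hc; rewrite fE hc.
    by exists false, 1%N; split; rewrite // Pn1 expr0 mulr1.
  by exists true, 1%N; split; rewrite // Pn1 expr1 mulr1 polyCN polyC1.
have [q mq qf] := ex_mirr_dvd sf1.
have [p pp Qp] := Qs mq.
set h := f %/ q.
have fE : f = h * q by rewrite divpK.
have h0 : h != 0 by apply: contraNneq f0 => h0; rewrite fE h0 mul0r.
have q0 : q != 0 by apply: monic_neq0; case/andP: mq.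
have shk : (size h <= k)%N.
  move: sfk; rewrite fE size_mul // => H.
  have := mirr_size mq; move: H; set a := size h; set b := size q; move=> H Hb; clearbody a b; rewrite -subn1 in H; lia.
have [s [m [m0 hE]]] := IH h shk h0.
exists s, (m * p)%N; split; first by rewrite muln_gt0 m0 prime_gt0.
by rewrite fE hE (PnM m0 (prime_gt0 pp)) (Pnp pp) Qp mulrA.
Qed.

Notation "x %:F" := (@FracField.tofrac _ x) (format "x %:F").

Definition sigma (x : rat) : F3t :=
  if x == 0 then 0
  else (-1)^+(numq x < 0)%R * (Pn (absz (numq x)))%:F / (Pn (absz (denq x)))%:F.

Lemma ratE (x : rat) : x != 0 ->
  x = (-1)^+(numq x < 0)%R * ((absz (numq x)))%:R / ((absz (denq x)))%:R.
Proof.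
move=> x0; rewrite -{1}(divq_num_den x); congr (_ / _).
  rewrite {1}[numq x]numEsign rmorphM /= rmorph_sign; congr (_ * _).

by case: (denq x) (denq_gt0 x).
Qed.

Lemma sigmaE (s : bool) a b : (0 < a)%N -> (0 < b)%N ->
  sigma ((-1)^+s * a%:R / b%:R) = (-1)^+s * (Pn a)%:F / (Pn b)%:F.
Proof.
move=> a0 b0; set x := _ * _ / _.
have ar : (a%:R : rat) != 0 by rewrite pnatr_eq0 -lt0n.
have br : (b%:R : rat) != 0 by rewrite pnatr_eq0 -lt0n.
have x0 : x != 0 by rewrite /x mulf_neq0 ?invr_eq0 ?mulf_neq0 ?signr_eq0.
rewrite /sigma (negPf x0).
have xE := ratE x0.
move: xE; set n := absz (numq x); set d := absz (denq x); set t := (numq x < 0)%R.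
have n0 : (0 < n)%N by rewrite absz_gt0 numq_eq0.
have d0 : (0 < d)%N by rewrite absz_gt0 denq_eq0.
move=> xE.
have key : (n * b = a * d)%N /\ t = s.
  move: xE; rewrite {1}/x => xE.
  have nr : (n%:R : rat) != 0 by rewrite pnatr_eq0 -lt0n.
  have dr : (d%:R : rat) != 0 by rewrite pnatr_eq0 -lt0n.
  have : (-1)^+s * a%:R * d%:R = (-1)^+t * n%:R * b%:R :> rat.
    by apply/eqP; rewrite -eqr_div // -xE.
  clearbody x; case: s {xE} => /=; case: t => /=; rewrite ?expr1 ?expr0 ?mul1r ?mulN1r.
  - by move/eqP; rewrite !mulNr eqr_opp -!natrM eqr_nat => /eqP ->; split.
  - move/eqP; rewrite !mulNr eq_sym -addr_eq0 -!natrM -natrD pnatr_eq0 addn_eq0 muln_eq0.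
    by move: n0 a0 b0 d0; lia.
  - move/eqP; rewrite !mulNr -addr_eq0 -!natrM -natrD pnatr_eq0 addn_eq0 muln_eq0.
    by move: n0 a0 b0 d0; lia.
  - by move/eqP; rewrite -!natrM eqr_nat => /eqP ->; split.
case: key => nd <-.
rewrite -!mulrA; congr (_ * _); apply/eqP.
rewrite eqr_div ?tofrac_eq0 ?Pn_neq0 // -!tofracM.
by rewrite -!PnM // nd.
Qed.

Lemma sigma0 : sigma 0 = 0.
Proof. by rewrite /sigma eqxx. Qed.

Lemma sigma_dec (x : rat) : x != 0 -> exists (s : bool) (a b : nat),
  [/\ (0 < a)%N, (0 < b)%N, coprime a b & x = (-1)^+s * a%:R / b%:R].
Proof.
move=> x0; exists (numq x < 0)%R, (absz (numq x)), (absz (denq x)); split.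
- by rewrite absz_gt0 numq_eq0.
- by rewrite absz_gt0 denq_eq0.
- exact: coprime_num_den.
- exact: ratE.
Qed.

Lemma nat_neq0 (b : nat) : (0 < b)%N -> (b%:R : rat) != 0.
Proof. by move=> b0; rewrite pnatr_eq0 -lt0n. Qed.

Lemma PnF_neq0 n : (Pn n)%:F != 0 :> F3t.
Proof. by rewrite tofrac_eq0 Pn_neq0. Qed.

Lemma sigmaM x y : sigma (x * y) = sigma x * sigma y.
Proof.
have [->|x0] := eqVneq x 0; first by rewrite mul0r sigma0 mul0r.
have [->|y0] := eqVneq y 0; first by rewrite mulr0 sigma0 mulr0.
have [s1 [a1 [b1 [a10 b10 _ ->]]]] := sigma_dec x0.
have [s2 [a2 [b2 [a20 b20 _ ->]]]] := sigma_dec y0.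
have e : (-1) ^+ s1 * a1%:R / b1%:R * ((-1) ^+ s2 * a2%:R / b2%:R) =
  (-1)^+(s1 (+) s2) * (a1 * a2)%:R / (b1 * b2)%:R :> rat.
  have := nat_neq0 b10; have := nat_neq0 b20.
  rewrite signr_addb !natrM => h1 h2.
  by field; repeat (apply/andP; split).
rewrite e !sigmaE ?muln_gt0 ?a10 ?a20 ?b10 ?b20 //.
rewrite signr_addb !PnM // !tofracM.
have := PnF_neq0 b1; have := PnF_neq0 b2.
move=> h1 h2; exact: (@fld1 {fraction Pl} _ _ _ _ _ _ h2 h1).
Qed.

Lemma sigma_neq0 x : x != 0 -> sigma x != 0.
Proof.
move=> x0; have [s [a [b [a0 b0 _ ->]]]] := sigma_dec x0.
by rewrite sigmaE // !mulf_neq0 ?signr_eq0 ?invr_eq0 ?PnF_neq0.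
Qed.

Lemma sigma1 : sigma 1 = 1.
Proof.
have : (1 : rat) = (-1)^+false * 1%:R / 1%:R by rewrite expr0 ?mul1r ?invr1 ?mulr1.
by move=> ->; rewrite sigmaE // Pn1 tofrac1 expr0 ?mul1r ?invr1 ?divr1 ?mulr1.
Qed.

Lemma sigmaN1 : sigma (-1) = -1.
Proof.
have : (-1 : rat) = (-1)^+true * 1%:R / 1%:R by rewrite expr1 ?mulr1 ?invr1 ?mulr1.
by move=> ->; rewrite sigmaE // Pn1 tofrac1 expr1 ?mulr1 ?invr1 ?divr1 ?mulr1.
Qed.

End Sig.

End QA.

Module QB.
Import QA.
Import GRing.Theory Num.Theory.
Local Open Scope ring_scope.
Set Implicit Arguments. Unset Strict Implicit. Unset Printing Implicit Defensive.
Local Notation Pl := {poly 'F_3}.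
Section Sig2.
Variable Q : nat -> Pl.
Hypothesis Qm : forall p, prime p -> mirr (Q p).
Hypothesis Qi : forall p r, prime p -> prime r -> Q p = Q r -> p = r.
Hypothesis Qs : forall q, mirr q -> exists2 p, prime p & Q p = q.
Local Notation sig := (sigma Q).

Lemma F3_m1 : (-1 : 'F_3) != 1.
Proof. by apply/eqP. Qed.

Lemma sigma_eq1 x : sig x = 1 -> x = 1.
Proof.
have [->|x0] := eqVneq x 0.
  by rewrite sigma0 => /eqP; rewrite eq_sym oner_eq0.
have [s [a [b [a0 b0 cab ->]]]] := sigma_dec x0.
rewrite (sigmaE Qm) // => e.
have e2 : (-1)^+s * FracField.tofrac (Pn Q a) = FracField.tofrac (Pn Q b).
  by rewrite -(divfK (PnF_neq0 Qm b) ((-1)^+s * FracField.tofrac (Pn Q a))) e mul1r.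
have e3 : FracField.tofrac ((-1)^+s * Pn Q a) = FracField.tofrac (Pn Q b).
  by rewrite tofracM rmorph_sign.
move/eqP: e3; rewrite tofrac_eq => /eqP {e e2} e.
have es : s = false.
  case: s e => // e; have := congr1 lead_coef e.
  rewrite expr1 mulN1r lead_coefN !(monicP (Pn_monic Qm _)) => h.
  by move: F3_m1; rewrite h eqxx.
move: e; rewrite es expr0 mul1r => /(Pn_inj Qm Qi cab a0 b0) [-> ->].
by rewrite expr0 ?mul1r ?invr1 ?mulr1 ?divr1.
Qed.

Lemma sigma_inj : injective sig.
Proof.
move=> x y e.
have [x0|x0] := eqVneq x 0.
  have [y0|y0] := eqVneq y 0; first by rewrite x0 y0.
  by move: (sigma_neq0 Qm y0); rewrite -e x0 sigma0 eqxx.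
have [y0|y0] := eqVneq y 0.
  by move: (sigma_neq0 Qm x0); rewrite e y0 sigma0 eqxx.
have : sig (x / y) = 1.
  apply: (mulIf (sigma_neq0 Qm y0)); rewrite -(sigmaM Qm) divfK // mul1r //.
by move=> /sigma_eq1 h; rewrite -(divfK y0 x) h mul1r.
Qed.

Lemma sigma_surj y : y != 0 -> exists x, x != 0 /\ sig x = y.
Proof.
move=> y0; have [f [g [g0 yE]]] := frac_repr y.
have f0 : f != 0 by apply: contraNneq y0 => f0; rewrite yE f0 tofrac0 mul0r.
have [s1 [a [a0 fE]]] := factor Qs f0.
have [s2 [b [b0 gE]]] := factor Qs g0.
exists ((-1)^+(s1 (+) s2) * a%:R / b%:R); split.
  by rewrite !mulf_neq0 ?signr_eq0 ?invr_eq0 ?nat_neq0.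
rewrite (sigmaE Qm) // yE fE gE !tofracM !rmorph_sign.
rewrite signr_addb -[(-1)^+s2 in LHS]invr_sign.
have := PnF_neq0 Qm b; have : ((-1)^+s2 : F3t) != 0 by rewrite signr_eq0.
move=> h1 h2; exact: (@fld2 {fraction Pl} _ _ _ _ h1 h2).
Qed.
End Sig2.

End QB.

Theorem mainTheorem19 :
  exists sigma : rat -> F3t,
    (* sigma restricts to a group isomorphism Q^x -> F_3(t)^x, with sigma 0 = 0 *)
    [/\ sigma 0 = 0,
        (forall x y, sigma (x * y) = sigma x * sigma y),
        injective sigma,
        (forall x, x != 0 -> sigma x != 0)
      & (forall y, y != 0 -> exists x, x != 0 /\ sigma x = y)]
    /\ near_vector_space (Fex sigma) (@setTV Vex)
    /\ (forall f g, Fex sigma f -> Fex sigma g -> f \o g = g \o f)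
    /\ is_block (Fex sigma) block1
    /\ is_block (Fex sigma) block2
    /\ (forall W, is_block (Fex sigma) W ->
          (forall v, W v <-> block1 v) \/ (forall v, W v <-> block2 v))
    /\ (forall u, quasi_kernel (Fex sigma) (@setTV Vex) u -> u <> 0 -> block1 u ->
          field_char (Fex sigma) u 0)
    /\ (forall u, quasi_kernel (Fex sigma) (@setTV Vex) u -> u <> 0 -> block2 u ->
          field_char (Fex sigma) u 3).
Proof.
have [Q [Qm Qi Qs]] := QA.exQ.
have h0 : QA.sigma Q 0 = 0 by apply: QA.sigma0.
have hM : forall x y, QA.sigma Q (x * y) = QA.sigma Q x * QA.sigma Q y.
  by move=> x y; apply: QA.sigmaM.
have hI : injective (QA.sigma Q) by apply: QB.sigma_inj.
have hN : forall x, x != 0 -> QA.sigma Q x != 0 by move=> x; apply: QA.sigma_neq0.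
have hS : forall y, y != 0 -> exists x, x != 0 /\ QA.sigma Q x = y.
  by move=> y; apply: QB.sigma_surj.
have h1 : QA.sigma Q 1 = 1 by apply: QA.sigma1.
have hN1 : QA.sigma Q (-1) = -1 by apply: QA.sigmaN1.
exists (QA.sigma Q); split; first by split.
exact: (QC.NV_all h0 hM hI hN hS h1 hN1).
Qed.
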